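(* Let $q$ be a prime power, $n$ a positive integer, $a\in\mathbb{F}_q$, let $l$ be a divisor of $q^n-1$, and let $p_1,\ldots,p_r$ be all the primes dividing $q^n-1$ but not $l$. Then $$N_a(q^n-1,q^n-1)\geq \sum_{i=1}^r N_a(p_il,l)+\sum_{i=1}^r N_a(l,p_il)-(2r-1)N_a(l,l).$$
   Context: For a divisor $e$ of $q^n-1$, an element $\xi\in\mathbb{F}_{q^n}^*$ is $e$-free if whenever $\xi=\gamma^d$ with $d\mid e$ and $\gamma\in\mathbb{F}_{q^n}$, we must have $d=1$. For divisors $l_1,l_2$ of $q^n-1$ and $a\in\mathbb{F}_q$, $N_a(l_1,l_2)$ is the number of $\alpha\in\mathbb{F}_{q^n}^*$ such that $\alpha$ is $l_1$-free, $\alpha+\alpha^{-1}$ is nonzero and $l_2$-free, and $\mathrm{Tr}_{\mathbb{F}_{q^n}|\mathbb{F}_q}(\alpha)=a$, where $\mathrm{Tr}_{\mathbb{F}_{q^n}|\mathbb{F}_q}(\alpha)=\alpha+\alpha^q+\cdots+\alpha^{q^{n-1}}$. *)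

(* Defs.v *)
From HB Require Import structures.
From mathcomp Require Import all_boot all_order all_algebra all_field.
Set Implicit Arguments. Unset Strict Implicit. Unset Printing Implicit Defensive.
Import GRing.Theory.
Local Open Scope ring_scope.

(* The field F_{q^n} is a finite field L with #|L| = q^n; F_q is identified
   with its unique subfield of order q, i.e. {x in L | x^q = x}. *)

Definition efree (L : finFieldType) (e : nat) (xi : L) : bool :=
  (xi != 0) &&
  [forall d : 'I_e.+1, forall g : L,
     ((d %| e)%N && (xi == g ^+ d)) ==> (val d == 1%N)].

Definition trq (L : finFieldType) (q n : nat) (alpha : L) : L :=
  \sum_(i < n) alpha ^+ (q ^ i).

Definition Na (L : finFieldType) (q n : nat) (a : L) (l1 l2 : nat) : nat :=
  #|[set alpha : L | [&& alpha != 0, efree l1 alpha,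
                         alpha + alpha^-1 != 0, efree l2 (alpha + alpha^-1)
                       & trq q n alpha == a]]|.

Definition bad_primes (q n l : nat) : seq nat :=
  [seq p <- primes (q ^ n - 1) | ~~ (p %| l)%N].

(* Main.v *)
Require Import Defs.
From HB Require Import structures.
From mathcomp Require Import all_boot all_order all_algebra all_field zify.
Import GRing.Theory Num.Theory.
Local Open Scope ring_scope.

Lemma efreeE (L : finFieldType) e (x : L) : (0 < e)%N ->
  efree e x = (x != 0) && all (fun p => ~~ [exists g : L, x == g ^+ p]) (primes e).
Proof.
move=> e0; rewrite /efree; case: (x != 0) => //=.
apply/forallP/allP.
- move=> H p; rewrite mem_primes => /and3P[pp _ pe]; apply/existsP => -[g /eqP xg].
  have ple : (p < e.+1)%N by rewrite ltnS dvdn_leq.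
  have := H (Ordinal ple) => /forallP /(_ g); rewrite /= pe xg eqxx /= => /eqP p1.
  by rewrite p1 in pp.
- move=> H d; apply/forallP => g; apply/implyP => /andP[de /eqP xg].
  case: (ltngtP (val d) 1) => // hd.
  + move: hd; rewrite ltnS leqn0 => /eqP d0.
    by move: de; rewrite d0 dvd0n => /eqP e00; rewrite e00 in e0.
  + have pp : prime (pdiv d) by rewrite pdiv_prime.
    have pd : (pdiv d %| d)%N := pdiv_dvd d.
    have : pdiv d \in primes e by rewrite mem_primes pp e0 (dvdn_trans pd de).
    move/H/negP => nH; exfalso; apply: nH; apply/existsP; exists (g ^+ (d %/ pdiv d)).
    by rewrite -exprM divnK // xg.
Qed.

Lemma PoszSum (I : Type) (r : seq I) (P : pred I) (F : I -> nat) :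
  (\sum_(i <- r | P i) F i)%:Z = \sum_(i <- r | P i) (F i)%:Z.
Proof. by rewrite (big_morph Posz PoszD (erefl _)). Qed.

Lemma pointw (s : seq nat) (f g : nat -> bool) :
  \sum_(p <- s) (f p : nat)%:Z + \sum_(p <- s) (g p : nat)%:Z - ((2 * size s)%:Z - 1)
  <= (all (fun p => f p && g p) s : nat)%:Z.
Proof.
elim: s => [|p s IH]; first by rewrite !big_nil.
rewrite !big_cons /=; move: IH.
case: (f p); case: (g p); case: (all _ s) => /=; lia.
Qed.

Lemma key (T : finType) (s : seq nat) (A C : pred T) (f g : nat -> pred T) :
  (forall x, C x = A x && all (fun p => f p x && g p x) s) ->
  \sum_(p <- s) (\sum_x (A x && f p x : nat))%:Z
  + \sum_(p <- s) (\sum_x (A x && g p x : nat))%:Z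
  - ((2 * size s)%:Z - 1) * (\sum_x (A x : nat))%:Z <= (\sum_x (C x : nat))%:Z.
Proof.
move=> HC.
rewrite !PoszSum.
under eq_bigr do rewrite PoszSum.
under [X in _ + X - _]eq_bigr do rewrite PoszSum.
rewrite [X in X + _ - _]exchange_big [X in _ + X - _]exchange_big /=.
rewrite mulr_sumr -sumrN -!big_split /=.
apply: ler_sum => x _; rewrite HC.
case: (A x) => /=; last by rewrite !big1 ?mulr0 ?subr0.
by rewrite mulr1; apply: pointw.
Qed.

Lemma NaE (L : finFieldType) q n (a : L) l1 l2 : Na q n a l1 l2 =
  \sum_(x : L) ([&& x != 0, efree l1 x, x + x^-1 != 0, efree l2 (x + x^-1)
                 & trq q n x == a] : nat).
Proof.
rewrite /Na -sum1_card big_mkcond /=; apply: eq_bigr => x _; rewrite inE.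
by case: ifP.
Qed.

Theorem lemma3p3 (L : finFieldType) (q n : nat) (a : L) (l : nat) :
  (exists p k : nat, [/\ prime p, (0 < k)%N & q = (p ^ k)%N]) ->
  (0 < n)%N ->
  #|L| = (q ^ n)%N ->
  a ^+ q = a ->
  (l %| q ^ n - 1)%N ->
  (\sum_(p <- bad_primes q n l) (Na q n a (p * l) l)%:Z)
    + (\sum_(p <- bad_primes q n l) (Na q n a l (p * l))%:Z)
    - ((2 * size (bad_primes q n l))%:Z - 1) * (Na q n a l l)%:Z
    <= (Na q n a (q ^ n - 1) (q ^ n - 1))%:Z.
Proof.
move=> [pr [k [pp k0 qE]]] n0 _ _ ldiv.
have q2 : (1 < q)%N.
  by rewrite qE (leq_trans (prime_gt1 pp)) // -{1}(expn1 pr) leq_pexp2l // prime_gt0.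
have m0 : (0 < q ^ n - 1)%N.
  by rewrite subn_gt0 (leq_trans q2) // -{1}(expn1 q) leq_pexp2l // ltnW.
have l0 : (0 < l)%N := dvdn_gt0 m0 ldiv.
set m := (q ^ n - 1)%N in m0 ldiv *.
set s := bad_primes q n l.
pose P (p : nat) (x : L) := ~~ [exists g : L, x == g ^+ p].
have efM : forall p x, p \in s -> efree (p * l) x = efree l x && P p x.
  move=> p x; rewrite mem_filter => /andP[npl]; rewrite mem_primes => /and3P[pp' _ _].
  have pl0 : (0 < p * l)%N by rewrite muln_gt0 prime_gt0.
  rewrite !efreeE //.
  have -> : all (fun p0 => ~~ [exists g, x == g ^+ p0]) (primes (p * l))
       = all (fun p0 => ~~ [exists g, x == g ^+ p0]) (p :: primes l).
    apply: eq_all_r => r; rewrite (primesM _ (prime_gt0 pp') l0).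
    by rewrite !inE (primes_prime pp') inE.
  rewrite /=; case: (x != 0) => //=; by rewrite andbC.
have efm : forall x, efree m x = efree l x && all (fun p => P p x) s.
  move=> x; rewrite !efreeE //; case: (x != 0) => //=.
  apply/allP/andP.
  - move=> H; split; apply/allP => r hr; apply: H.
    + move: hr; rewrite !mem_primes => /and3P[-> _ rl]; by rewrite m0 (dvdn_trans rl).
    + by move: hr; rewrite mem_filter => /andP[].
  - move=> [/allP H1 /allP H2] r hr.
    case rl: (r %| l)%N.
    + apply: H1; move: hr; rewrite !mem_primes => /and3P[-> _ _]; by rewrite l0 rl.
    + apply: H2; by rewrite mem_filter rl.
pose B x := [&& x != 0, efree l x, x + x^-1 != 0, efree l (x + x^-1) & trq q n x == a].
have E1 : {in s, forall p, (Na q n a (p * l) l)%:Z = (\sum_x (B x && P p x : nat))%:Z}.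
  move=> p ps; rewrite NaE; congr Posz; apply: eq_bigr => x _; rewrite efM // /B.
  by case: (P p x); rewrite /= ?andbT ?andbF ?andFb.
have E2 : {in s, forall p, (Na q n a l (p * l))%:Z = (\sum_(x : L) (B x && P p (x + x^-1)%R : nat))%:Z}.
  move=> p ps; rewrite NaE; congr Posz; apply: eq_bigr => x _; rewrite efM // /B.
  by case: (P p (x + x^-1)); rewrite /= ?andbT ?andbF ?andFb.
rewrite (eq_big_seq _ E1) (eq_big_seq _ E2) NaE -/(B _).
rewrite NaE.
apply: key => x; rewrite !efm /B.
have -> : all (fun p => P p x && P p (x + x^-1)%R) s = all (P^~ x) s && all (P^~ (x + x^-1)%R) s.
  by rewrite -all_predI.
move: (x != 0) (x + x^-1 != 0) (trq q n x == a) (efree l x) (efree l (x + x^-1)%R)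
  (all (P^~ x) s) (all (P^~ (x + x^-1)%R) s).
by do 7!case.
Qed.
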